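(* Let $d\ge3$ and let $V:\mathbb{C}^{d^2-1}\to\mathbb{C}^d\otimes\mathbb{C}^d$ be any isometry whose range is orthogonal to $\ket{\phi_d^+}=\frac1{\sqrt d}\sum_{k=0}^{d-1}\ket{k}\otimes\ket{k}$ (equivalently, the range is the orthogonal complement of $\ket{\phi^+_d}$). Let $\mathcal{N}^V_{d^2-1}:\mathcal{L}(\mathbb{C}^{d^2-1})\to\mathcal{L}(\mathbb{C}^d)$ be $\mathcal{N}^V_{d^2-1}(\rho)=\operatorname{Tr}_E(V\rho V^\dagger)$ (trace over the second factor). Then $M_{k_d}\in\mathcal{P}^{(d^2-1)\to(d^2-1)}_{\min}(\mathcal{N}^V_{d^2-1},V)$, and consequently $\mathcal{P}^{(d^2-1)\to(d^2-1)}_{\min}(\mathcal{N}^V_{d^2-1},V)\not\subseteq\mathcal{P}^{(d^2-1)\to(d^2-1)}(\mathcal{Q}_{\tilde d})$ for every $\tilde d<d^2-1$; i.e. minimal environment assistance optimally unlocks the encoding strength of $\mathcal{N}^V_{d^2-1}$.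
   Context: $M_{k_d}=M_\Sigma\oplus\mathbb{I}_{d(d-1)}$, where $M_\Sigma$ is the $(d-1)\times(d-1)$ lower-triangular matrix with $(M_\Sigma)_{ij}=0$ for $j>i$, $(M_\Sigma)_{i1}=\frac2{i(i+1)}$, $(M_\Sigma)_{ij}=\frac1{i(i+1)}$ for $1<j<i$, and $(M_\Sigma)_{ii}=\frac{i}{i+1}$ for $i>1$. $\mathcal{P}^{n\to m}(\mathcal{Q}_d)$ is the set of $n\times m$ matrices $P_{ij}=\operatorname{Tr}[\Lambda_j\rho_i]$ with $\rho_i$ density matrices on $\mathbb{C}^d$ and $\{\Lambda_j\}$ a POVM on $\mathbb{C}^d$. For a channel $\mathcal{N}$ with isometry $V:\mathbb{C}^{d_A}\to\mathbb{C}^{d_B}\otimes\mathbb{C}^{d_E}$ (first factor receiver, second environment), $\mathcal{P}^{n\to m}_{\min}(\mathcal{N},V)$ is the set of $n\times m$ matrices $P_{ij}=\sum_{l,k}q(j\mid l,k)\operatorname{Tr}[(\Lambda^B_l\otimes\Lambda^E_k)V\rho_iV^\dagger]$, where $\rho_i$ are density matrices on $\mathbb{C}^{d_A}$, $\{\Lambda^B_l\}$, $\{\Lambda^E_k\}$ are finite-outcome POVMs on $\mathbb{C}^{d_B}$, $\mathbb{C}^{d_E}$ chosen independently, and $q(\cdot\mid l,k)$ is a probability distribution on $\{1,\dots,m\}$. *)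

(* Defs.v *)
From mathcomp Require Import all_boot all_order all_algebra.
From mathcomp Require Import spectral.
From mathcomp.real_closed Require Export mxtens.
From mathcomp Require Import zify.

Set Implicit Arguments.
Unset Strict Implicit.
Unset Printing Implicit Defensive.

Import Order.TTheory GRing.Theory Num.Theory.
Local Open Scope ring_scope.
Local Open Scope sesquilinear_scope.

Section QDefs.
Variable C : numClosedFieldType.

Definition adj {m n} (A : 'M[C]_(m, n)) : 'M[C]_(n, m) := A ^t*.

Definition psd {n} (A : 'M[C]_n) : Prop :=
  adj A = A /\ forall x : 'cV[C]_n, 0 <= (adj x *m A *m x) 0 0.

Definition density {n} (rho : 'M[C]_n) : Prop := psd rho /\ \tr rho = 1.

Definition povm {n L} (Lam : 'I_L -> 'M[C]_n) : Prop :=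
  (forall l, psd (Lam l)) /\ \sum_(l < L) Lam l = 1%:M.

(* isometry V : C^dA -> C^dB (x) C^dE, as a (dB*dE) x dA matrix *)
Definition is_isometry {p q} (V : 'M[C]_(p, q)) : Prop := adj V *m V = 1%:M.

Definition Pset (d n m : nat) (P : 'M[C]_(n, m)) : Prop :=
  exists (rho : 'I_n -> 'M[C]_d) (Lam : 'I_m -> 'M[C]_d),
    (forall i, density (rho i)) /\ povm Lam /\
    forall i j, P i j = \tr (Lam j *m rho i).

(* P^{n->m}_min(N, V), for the channel N = Tr_E(V . V^dagger); N is
   determined by V, so the set is parameterized by V. The first tensor
   factor (C^dB) is the receiver, the second (C^dE) the environment. *)
Definition Pmin (dA dB dE n m : nat) (V : 'M[C]_(dB * dE, dA))
    (P : 'M[C]_(n, m)) : Prop :=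
  exists (rho : 'I_n -> 'M[C]_dA) (L K : nat)
         (LamB : 'I_L -> 'M[C]_dB) (LamE : 'I_K -> 'M[C]_dE)
         (q : 'I_L -> 'I_K -> 'I_m -> C),
    (forall i, density (rho i)) /\ povm LamB /\ povm LamE /\
    (forall l k j, 0 <= q l k j) /\
    (forall l k, \sum_(j < m) q l k j = 1) /\
    forall i j, P i j =
      \sum_(l < L) \sum_(k < K)
         q l k j * \tr ((LamB l *t LamE k) *m (V *m rho i *m adj V)).

Definition phiplus (d : nat) : 'cV[C]_(d * d) :=
  (sqrtC d%:R)^-1 *: \sum_(k < d) (((delta_mx k 0 : 'cV[C]_d) *t (delta_mx k 0 : 'cV[C]_d)) : 'cV[C]_(d * d)).

(* M_Sigma : (d-1) x (d-1), indices 1-based in the paper *)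
Definition MSigma (d : nat) : 'M[C]_(d.-1) :=
  \matrix_(i, j)
    (let a := (i.+1)%N in let b := (j.+1)%N in
     if (a < b)%N then 0
     else if b == 1%N then 2%:R / (a * a.+1)%:R
     else if a == b then a%:R / a.+1%:R
     else 1 / (a * a.+1)%:R).

End QDefs.

Lemma Mkd_dim (d : nat) : (d.-1 + d * d.-1 = d ^ 2 - 1)%N.
Proof. case: d => [|d] //=; rewrite expnS expn1 /=; lia. Qed.

Definition Mkd (C : numClosedFieldType) (d : nat) : 'M[C]_(d ^ 2 - 1) :=
  castmx (Mkd_dim d, Mkd_dim d)
    (block_mx (MSigma C d) 0 0 (1%:M : 'M[C]_(d * d.-1))).

(* Main.v *)
Require Import Defs.
From mathcomp Require Import all_boot all_order all_algebra.
From mathcomp Require Import spectral.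
From mathcomp Require Import ring.
Import Order.TTheory GRing.Theory Num.Theory.
Local Open Scope ring_scope.
Set Implicit Arguments.
Unset Strict Implicit.
Unset Printing Implicit Defensive.
Section Aux.
Variable C : numClosedFieldType.

Definition Qf {n} (A : 'M[C]_n) (w : 'cV[C]_n) : C := (adj w *m A *m w) 0 0.

Lemma entryQ m n (P : 'M[C]_(m,n)) (A : 'M[C]_n) k :
  (P *m A *m adj P) k k = Qf A (adj (row k P)).
Proof.
rewrite /Qf /adj !mxE; apply: eq_bigr => j _; rewrite !mxE; congr (_ * _).
by apply: eq_bigr => a _; rewrite !mxE conjCK.
Qed.

Lemma psd_spec n (A : 'M[C]_n) : psd A ->
  exists (P : 'M[C]_n) (D : 'rV[C]_n),
    P *m adj P = 1%:M /\ A = adj P *m diag_mx D *m P /\ forall k, 0 <= D 0 k.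
Proof.
move=> [hA hQ].
have nA : A \is normalmx by apply/normalmxP; rewrite -/(adj A) hA.
have := orthomx_spectralP nA.
set P := spectralmx A; set D := spectral_diag A.
move=> /= eA.
have uP : P \is unitarymx by apply: spectral_unitarymx.
have PP : P *m adj P = 1%:M by apply/unitarymxP.
rewrite invmx_unitary // in eA.
exists P, D; split => //; split => //.
move=> k.
have : P *m A *m adj P = diag_mx D.
  rewrite eA /adj !mulmxA PP mul1mx -!mulmxA.
  by rewrite -/(adj P) PP mulmx1.
move=> /matrixP /(_ k k); rewrite entryQ mxE eqxx mulr1n => <-.
exact: hQ.
Qed.

Lemma adj_mul m n p (A : 'M[C]_(m,n)) (B : 'M[C]_(n,p)) : adj (A *m B) = adj B *m adj A.
Proof. by rewrite /adj trmx_mul map_mxM. Qed.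

Lemma adjK m n (A : 'M[C]_(m,n)) : adj (adj A) = A.
Proof. by rewrite /adj trmxCK. Qed.

Lemma Qdiag n (D : 'rV[C]_n) (y : 'cV[C]_n) :
  (adj y *m diag_mx D *m y) 0 0 = \sum_k D 0 k * (`|y k 0| ^+ 2).
Proof.
rewrite mul_mx_diag !mxE; apply: eq_bigr => /= k _.
rewrite (mxE _ _ 0 k) /adj !mxE normCK. 
by rewrite [_ * D 0 k]mulrC -mulrA [_^* * _]mulrC.
Qed.

Lemma psd_q0 n (L : 'M[C]_n) w : psd L -> Qf L w = 0 -> L *m w = 0.
Proof.
move=> /psd_spec [P [D [PP [eL hD]]]].
rewrite /Qf eL -!mulmxA mulmxA -adj_mul mulmxA Qdiag => h0.
set y := P *m w in h0 *.
have z : forall k, D 0 k * y k 0 = 0.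
  move=> k.
  have := psumr_eq0P (fun k _ => mulr_ge0 (hD k) (exprn_ge0 2 (normr_ge0 (y k 0)))) h0 (i:=k) isT.
  move=> /eqP; rewrite mulf_eq0 expf_eq0 /= normr_eq0 => /orP[/eqP->|/eqP->];
  by rewrite ?mul0r ?mulr0.
have -> : diag_mx D *m y = 0.
  apply/matrixP => i j; rewrite mul_diag_mx mxE (ord1 j) z; by rewrite mxE.
by rewrite mulmx0.
Qed.
Lemma tr_decomp k (L : 'M[C]_k) (P : 'M[C]_k) D :
  \tr (L *m (adj P *m diag_mx D *m P)) = \sum_i Qf L (adj (row i P)) * D 0 i.
Proof.
rewrite mulmxA mxtrace_mulC mulmxA mulmxA mul_mx_diag /mxtrace.
by apply: eq_bigr => /= i _; rewrite (mxE _ _ i i) -entryQ mulmxA.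
Qed.

Lemma psd_Qf k (L : 'M[C]_k) x : psd L -> 0 <= Qf L x.
Proof. by move=> [_ h]; exact: h. Qed.

Lemma find_vec n k (R : 'M[C]_k) (Lam : 'I_n -> 'M[C]_k) i0 (S : pred 'I_n) :
  psd R -> (forall j, psd (Lam j)) -> \tr (Lam i0 *m R) != 0 ->
  (forall j, S j -> \tr (Lam j *m R) = 0) ->
  exists x : 'cV[C]_k, Lam i0 *m x != 0 /\ forall j, S j -> Lam j *m x = 0.
Proof.
move=> /psd_spec [P [D [PP [eR hD]]]] hL hi0 hS.
rewrite eR tr_decomp in hi0.
have [i hi] : exists i, Qf (Lam i0) (adj (row i P)) * D 0 i != 0.
  apply/existsP; apply: contraNT hi0 => /existsPn H.
  by rewrite big1 // => i _; apply/eqP/negbNE/H.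
exists (adj (row i P)); split.
  apply: contraNneq hi => h; by rewrite /Qf -mulmxA h mulmx0 mxE mul0r.
move=> j /hS; rewrite eR tr_decomp => h0.
have := psumr_eq0P (fun i _ => mulr_ge0 (@psd_Qf _ (Lam j) (adj (row i P)) (hL j)) (hD i)) h0 (i:=i) isT.
move=> /eqP; rewrite mulf_eq0 => /orP[/eqP q0|/eqP d0]; last first.
  by move: hi; rewrite d0 mulr0 eqxx.
exact: psd_q0 (hL j) q0.
Qed.
Lemma tri_dim n k (P : 'M[C]_n) :
  (forall i j : 'I_n, (i < j)%N -> P i j = 0) -> (forall i, P i i != 0) ->
  Pset k P -> (n <= k)%N.
Proof.
move=> htri hdiag [rho [Lam [hrho [[hL _] hP]]]].
have hx : forall i : 'I_n, exists x : 'cV[C]_k,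
    Lam i *m x != 0 /\ forall j : 'I_n, (i < j)%N -> Lam j *m x = 0.
  move=> i; apply: find_vec (hrho i).1 hL _ _.
    by rewrite -hP.
  by move=> j hj; rewrite -hP htri.
have [x hxP] := fin_all_exists hx.
have hb : forall i : 'I_n, exists b : 'I_k, (Lam i *m x i) b 0 != 0.
  move=> i; apply/existsP; have := (hxP i).1; apply: contraNT => /existsPn H.
  by apply/eqP/matrixP => a c; rewrite ord1 [RHS]mxE; apply/eqP/negbNE/H.
have [b hbP] := fin_all_exists hb.
pose X : 'M[C]_(n, k) := \matrix_(i, a) x i a 0.
pose W : 'M[C]_(k, n) := \matrix_(a, j) Lam j (b j) a.
have GE : forall i j, (X *m W) i j = (Lam j *m x i) (b j) 0.
  move=> i j; rewrite !mxE; apply: eq_bigr => a _; by rewrite !mxE mulrC.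
have hG : X *m W \in unitmx.
  rewrite unitmxE unitfE det_trig.
    rewrite prodf_seq_neq0; apply/allP => i _ /=; by rewrite GE.
  apply/forallP => i; apply/forallP => j; apply/implyP => hij.
  by rewrite GE (hxP i).2 // mxE.
have : invmx (X *m W) *m X *m W = 1%:M by rewrite -mulmxA mulVmx.
move=> /mulmx1_min_rank h; exact: leq_trans h (rank_leq_col X).
Qed.
Lemma adjD m n (A B : 'M[C]_(m,n)) : adj (A + B) = adj A + adj B.
Proof. by rewrite /adj linearD /= map_mxD. Qed.

Lemma adj1 n : adj (1%:M : 'M[C]_n) = 1%:M.
Proof. by rewrite /adj trmx1 map_mx1. Qed.

Lemma VVproj n m (e : (m + 1)%N = n) (V : 'M[C]_(n, m)) (phi : 'cV[C]_n) :
  adj V *m V = 1%:M -> adj phi *m V = 0 -> adj phi *m phi = 1%:M ->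
  V *m adj V = 1%:M - phi *m adj phi.
Proof.
subst n => hV hpV hp.
have hVp : adj V *m phi = 0 by rewrite -[phi]adjK -adj_mul hpV /adj trmx0 map_mx0.
have h : adj (row_mx V phi) *m row_mx V phi = 1%:M.
  rewrite /adj tr_row_mx map_col_mx -!/(adj _) mul_col_row hV hVp hpV hp.
  by rewrite -scalar_mx_block.
have := mulmx1C h.
rewrite /adj tr_row_mx map_col_mx -!/(adj _) mul_row_col => <-.
by rewrite addrK.
Qed.

Lemma adjy_ge0 p (y : 'cV[C]_p) : 0 <= (adj y *m y) 0 0.
Proof.
rewrite mxE sumr_ge0 // => i _; rewrite !mxE mulrC -normCK; exact: exprn_ge0.
Qed.

Lemma state_ok n m (V : 'M[C]_(n,m)) (phi psi : 'cV[C]_n) :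
  V *m adj V = 1%:M - phi *m adj phi -> adj phi *m psi = 0 -> adj psi *m psi = 1%:M ->
  density (adj V *m (psi *m adj psi) *m V) /\ V *m (adj V *m (psi *m adj psi) *m V) *m adj V = psi *m adj psi.
Proof.
move=> hVV hp hpsi.
have e1 : V *m adj V *m psi = psi by rewrite hVV mulmxBl mul1mx -mulmxA hp mulmx0 subr0.
have e2 : adj psi *m (V *m adj V) = adj psi.
  have hp' : adj psi *m phi = 0 by rewrite -[phi]adjK -adj_mul hp /adj trmx0 map_mx0.
  by rewrite hVV mulmxBr mulmx1 mulmxA hp' mul0mx subr0.
split; last by rewrite !mulmxA e1 -mulmxA -mulmxA e2.
split; last first.
  have -> : adj V *m (psi *m adj psi) *m V = (adj V *m psi) *m (adj psi *m V) by rewrite !mulmxA.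
  rewrite mxtrace_mulC mulmxA -(mulmxA (adj psi)) e2 hpsi.
  by rewrite mxtrace1.
split.
  by rewrite !adj_mul !adjK !mulmxA.
move=> x.
have -> : adj x *m (adj V *m (psi *m adj psi) *m V) *m x =
   adj (adj psi *m V *m x) *m (adj psi *m V *m x).
  by rewrite !adj_mul !adjK !mulmxA.
exact: adjy_ge0.
Qed.
End Aux.


Section Conc.
Variable C : numClosedFieldType.

Definition vec m p (f : 'I_m -> 'I_p -> C) : 'cV[C]_(m * p) :=
  \col_r f (mxtens_unindex r).1 (mxtens_unindex r).2.

Lemma vecE m p f l k : @vec m p f (mxtens_index (l,k)) 0 = f l k.
Proof. by rewrite mxE mxtens_indexK. Qed.

Lemma sum_tens m p (F : 'I_(m * p) -> C) :
  \sum_r F r = \sum_l \sum_k F (mxtens_index (l,k)).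
Proof.
rewrite pair_bigA /= (reindex (@mxtens_index m p)) /=.
  by apply: eq_bigr => -[l k].
by exists (@mxtens_unindex m p) => x _; [exact: mxtens_indexK | exact: mxtens_unindexK].
Qed.

Lemma inner_vec m p f g :
  (adj (@vec m p f) *m vec g) 0 0 = \sum_l \sum_k (f l k)^* * g l k.
Proof.
rewrite mxE sum_tens; apply: eq_bigr => l _; apply: eq_bigr => k _.
by rewrite /adj !mxE mxtens_indexK.
Qed.

Lemma phiE d : phiplus C d = vec (fun l k => (sqrtC d%:R)^-1 * (l == k)%:R).
Proof.
apply/matrixP => r j; rewrite ord1; case: (mxtens_indexP r) => l k.
rewrite vecE /phiplus mxE summxE.
have o1 : forall x : 'I_1, (x == 0) = true by move=> x; rewrite ord1.
congr (_ * _).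
rewrite (bigD1 l) //= big1 => [|k' hk'].
  by rewrite !mxE mxtens_indexK /= !o1 !andbT eqxx addr0 mul1r eq_sym.
by rewrite !mxE mxtens_indexK /= !o1 !andbT eq_sym (negbTE hk') mul0r.
Qed.


Lemma sum_diag2 m (F : 'I_m -> 'I_m -> C) :
  (forall l k, l != k -> F l k = 0) -> \sum_l \sum_k F l k = \sum_l F l l.
Proof.
move=> h; apply: eq_bigr => l _; rewrite (bigD1 l) //= big1 ?addr0 // => k hk.
by apply: h; rewrite eq_sym.
Qed.

Lemma sum_delta2 m p (l0 : 'I_m) (k0 : 'I_p) (G : 'I_m -> 'I_p -> C) :
  \sum_l \sum_k ((l == l0) && (k == k0))%:R * G l k = G l0 k0.
Proof.
rewrite (bigD1 l0) //= [X in _ + X]big1 => [|l hl]; last first.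
  by apply: big1 => k _; rewrite (negbTE hl) mul0r.
rewrite addr0 (bigD1 k0) //= [X in _ + X]big1 => [|k hk]; last by rewrite (negbTE hk) andbF mul0r.
by rewrite !eqxx mul1r addr0.
Qed.

Lemma sum_step N b (x y : C) : (b < N)%N ->
  \sum_(l < N) (if (l < b)%N then x else if (l == b :> nat) then y else 0) = b%:R * x + y.
Proof.
elim: N => // N IH; rewrite ltnS leq_eqVlt => /orP[/eqP eb|hb].
  rewrite big_ord_recr /= -eb ltnn eqxx; congr (_ + _).
  rewrite mulr_natl -[in RHS](card_ord b) -sumr_const; apply: eq_bigr => i _.
  by rewrite /= ltn_ord.
rewrite big_ord_recr /= IH // (ltnNge N) (ltnW hb) /= (gtn_eqF hb) addr0.
done.
Qed.

Lemma conj_nat_real (x : C) : x \is Num.real -> x^* = x.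
Proof. exact: conj_Creal. Qed.

Lemma real_sqrtV (x : C) : 0 <= x -> (sqrtC x)^-1 \is Num.real.
Proof. by move=> h; rewrite rpredV sqrtC_real. Qed.


Variable n : nat.
Local Notation d := n.+2.

Definition sd : C := sqrtC (d%:R).
Definition cA (a : 'I_n.+1) : C := (sqrtC ((a.+1 * a.+2)%:R))^-1.
Definition wA (a : 'I_n.+1) (l : nat) : C :=
  if (l < a.+1)%N then cA a else if (l == a.+1 :> nat) then - (a.+1)%:R * cA a else 0.
Definition fA (a : 'I_n.+1) (l k : 'I_d) : C := if l == k then wA a l else 0.
Definition fB (p : 'I_(d * n.+1)) (l k : 'I_d) : C :=
  ((l == (mxtens_unindex p).1) && (k == lift (mxtens_unindex p).1 (mxtens_unindex p).2))%:R.

Lemma sd_real : sd^-1 \is Num.real.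
Proof. by apply: real_sqrtV; rewrite ler0n. Qed.

Lemma cA_real a : cA a \is Num.real.
Proof. by apply: real_sqrtV; rewrite ler0n. Qed.

Lemma wA_real a l : wA a l \is Num.real.
Proof.
rewrite /wA; case: ifP => _; first exact: cA_real.
case: ifP => _ //; by rewrite rpredM ?rpredN ?cA_real // realn.
Qed.

Lemma cA2 a : cA a * cA a = ((a.+1 * a.+2)%:R)^-1.
Proof. by rewrite /cA -invfM -expr2 sqrtCK. Qed.

Lemma sd2 : sd^-1 * sd^-1 = (d%:R)^-1.
Proof. by rewrite /sd -invfM -expr2 sqrtCK. Qed.

Lemma phi_norm : adj (phiplus C d) *m phiplus C d = 1%:M.
Proof.
rewrite [LHS]mx11_scalar phiE inner_vec; congr (_%:M).
rewrite sum_diag2 => [|l k hlk]; last by rewrite (negbTE hlk) mulr0 mulr0.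
under eq_bigr do rewrite eqxx mulr1 conj_Creal ?sd_real // sd2.
have h : (d%:R : C) != 0 by rewrite pnatr_eq0.
by rewrite sumr_const card_ord -mulr_natl mulr1 -[RHS](mulVf h) mulr_natr.
Qed.

Lemma psiA_norm a : adj (vec (fA a)) *m vec (fA a) = 1%:M.
Proof.
rewrite [LHS]mx11_scalar inner_vec; congr (_%:M).
rewrite sum_diag2 => [|l k hlk]; last by rewrite /fA (negbTE hlk) mulr0.
rewrite /fA; under eq_bigr do rewrite eqxx conj_Creal ?wA_real //.
have -> : \sum_(l < d) wA a l * wA a l = \sum_(l < d)
   (if (l < a.+1)%N then cA a * cA a else if (l == a.+1 :> nat) then
     (a.+1)%:R ^+ 2 * (cA a * cA a) else 0).
  apply: eq_bigr => l _; rewrite /wA; case: ifP => // _; case: ifP => _; last by rewrite mul0r.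
  by rewrite mulNr mulrNN mulrACA expr2.
rewrite sum_step; last by rewrite ltnS.
rewrite cA2 -mulrDl -natrX -natrD.
have -> : (a.+1 + a.+1 ^ 2 = a.+1 * a.+2)%N by rewrite expnS expn1 [RHS]mulnS.
by rewrite mulfV // pnatr_eq0.
Qed.


Lemma psiA_orth a : adj (phiplus C d) *m vec (fA a) = 0.
Proof.
rewrite [LHS]mx11_scalar phiE inner_vec.
rewrite sum_diag2 => [|l k hlk]; last by rewrite /fA (negbTE hlk) mulr0.
rewrite /fA; under eq_bigr do rewrite eqxx mulr1 conj_Creal ?sd_real //.
rewrite -mulr_sumr /wA sum_step; last by rewrite ltnS.
by rewrite mulNr addrN mulr0 raddf0.
Qed.

Lemma fB_E l0 m0 l k : fB (mxtens_index (l0, m0)) l k = ((l == l0) && (k == lift l0 m0))%:R.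
Proof. by rewrite /fB mxtens_indexK. Qed.

Lemma psiB_norm p : adj (vec (fB p)) *m vec (fB p) = 1%:M.
Proof.
rewrite [LHS]mx11_scalar inner_vec; congr (_%:M).
case: (mxtens_indexP p) => l0 m0.
under eq_bigr do under eq_bigr do rewrite fB_E rmorph_nat.
by rewrite sum_delta2 !eqxx.
Qed.

Lemma psiB_orth p : adj (phiplus C d) *m vec (fB p) = 0.
Proof.
rewrite [LHS]mx11_scalar phiE inner_vec.
case: (mxtens_indexP p) => l0 m0.
under eq_bigr do under eq_bigr do rewrite fB_E mulrC.
by rewrite sum_delta2 (negbTE (neq_lift l0 m0)) mulr0 rmorph0 raddf0.
Qed.


Local Notation S := 'I_(n.+1 + d * n.+1).
Definition colA (l : 'I_d) : 'I_n.+1 := inord l.-1.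
Definition tgt (l k : 'I_d) : S :=
  if l == k then lshift _ (colA l)
  else rshift _ (mxtens_index (l, odflt ord0 (unlift l k))).
Definition fS (s : S) : 'I_d -> 'I_d -> C :=
  match split s with inl a => fA a | inr p => fB p end.

Lemma split_l m p (a : 'I_m) : split (lshift p a) = inl a.
Proof. exact: (unsplitK (inl a)). Qed.
Lemma split_r m p (b : 'I_p) : split (rshift m b) = inr b.
Proof. exact: (unsplitK (inr b)). Qed.

Lemma colAE l : (colA l : nat) = l.-1.
Proof. rewrite /colA inordK //; case: l => [[|l]] //= h; exact: ltnW. Qed.

Lemma tr_E (l k : 'I_d) (psi : 'cV[C]_(d * d)) :
  \tr ((delta_mx l l *t delta_mx k k) *m (psi *m adj psi)) =
  `|psi (mxtens_index (l,k)) 0| ^+ 2.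
Proof.
set r := mxtens_index (l,k).
have -> : (delta_mx l l : 'M[C]_d) *t (delta_mx k k : 'M[C]_d) = delta_mx r r.
  apply/matrixP => i j; case: (mxtens_indexP i) => l1 k1.
  case: (mxtens_indexP j) => l2 k2; rewrite tensmxE !mxE.
  rewrite !(inj_eq (can_inj (@mxtens_indexK _ _))) !xpair_eqE.
  by case: (l1 == l); case: (l2 == l); case: (k1 == k); case: (k2 == k);
    rewrite ?mulr0 ?mul0r ?mulr1.
rewrite -(@mul_delta_mx _ _ 1 _ 0) -mulmxA mxtrace_mulC trace_mx11 -mulmxA -rowE.
by rewrite mxE -colE !mxE big_ord1 !mxE normCK.
Qed.


Lemma MSigma_sum (a b : 'I_n.+1) :
  \sum_(l < d) (colA l == b)%:R * `|wA a l| ^+ 2 = MSigma C d a b.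
Proof.
under eq_bigr do rewrite real_normK ?wA_real //.
have cE : forall l, (colA l == b) = (l.-1 == b) by move=> l; rewrite -colAE.
under eq_bigr do rewrite cE.
clear cE.
rewrite big_ord_recl big_ord_recl /= /bump !leq0n !add0n !add1n.
under eq_bigr do rewrite !leq0n !add1n /=.
rewrite /MSigma mxE /wA /=.
have c2 := cA2 a.
case: b => [[|b] hb] /=.
  rewrite big1 => [|i _]; last by rewrite mul0r.
  case: a c2 => [[|a'] ha] /= c2;
    by rewrite !mul1r addr0 !expr2 ?mulr1n ?mulN1r ?mulrNN c2 [RHS]mulr_natl mulr2n.
rewrite !mul0r !add0r.
under eq_bigr do rewrite add0n eqSS.
rewrite (eq_bigr (fun i : 'I_n => if (i == b :> nat) then
   (if (i.+2 < a.+1)%N then cA a else if i.+2 == a.+1 then 1 *- a.+1 * cA a else 0) ^+ 2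
   else 0)); last by move=> i _; case: eqP; rewrite ?mul1r ?mul0r.
rewrite -big_mkcond.
have hb' : (b < n)%N by [].
rewrite (big_pred1 (Ordinal hb')) /=; last by [].
case: (ltngtP a.+1 b.+2) => h.
- by rewrite expr2 mul0r.
- by rewrite expr2 c2 div1r.
- rewrite expr2 mulrACA c2.
  have h1 : (a.+1%:R : C) != 0 by rewrite pnatr_eq0.
  have h2 : (a.+2%:R : C) != 0 by rewrite pnatr_eq0.
  rewrite !natrM; field; by rewrite -!natrD [1 + _]addrC natr1 !pnatr_eq0.
Qed.


Lemma normb2 (b : bool) : `|(b%:R : C)| ^+ 2 = b%:R.
Proof. by case: b; rewrite ?normr1 ?normr0 expr2 ?mulr1 ?mulr0. Qed.

Lemma main_sum (s j : S) :
  \sum_l \sum_k (tgt l k == j)%:R * `|fS s l k| ^+ 2 =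
  block_mx (MSigma C d) 0 0 (1%:M : 'M[C]_(d * n.+1)) s j.
Proof.
case: (split_ordP s) => [a -> | p ->]; rewrite /fS ?split_l ?split_r.
  rewrite sum_diag2 => [|l k hlk]; last by rewrite /fA (negbTE hlk) normr0 expr2 !mulr0.
  under eq_bigr do rewrite /fA /tgt !eqxx.
  case: (split_ordP j) => [b -> | p' ->].
    under eq_bigr do rewrite eq_lshift.
    by rewrite block_mxEul; exact: MSigma_sum.
  under eq_bigr do rewrite eq_lrshift mul0r.
  by rewrite big1 // block_mxEur mxE.
case: (mxtens_indexP p) => l0 m0.
under eq_bigr do under eq_bigr do rewrite fB_E normb2 mulrC.
rewrite sum_delta2 /tgt (negbTE (neq_lift l0 m0)) liftK /=.
case: (split_ordP j) => [b -> | p' ->].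
  by rewrite eq_rlshift block_mxEdl mxE.
by rewrite eq_rshift block_mxEdr mxE.
Qed.


Lemma psi_norm s : adj (vec (fS s)) *m vec (fS s) = 1%:M.
Proof. rewrite /fS; case: split => [a|p]; [exact: psiA_norm | exact: psiB_norm]. Qed.

Lemma psi_orth s : adj (phiplus C d) *m vec (fS s) = 0.
Proof. rewrite /fS; case: split => [a|p]; [exact: psiA_orth | exact: psiB_orth]. Qed.

Lemma Mkd_cast (i j : 'I_(d ^ 2 - 1)) :
  Mkd C d i j = block_mx (MSigma C d) 0 0 (1%:M : 'M[C]_(d * n.+1))
     (cast_ord (esym (Mkd_dim d)) i) (cast_ord (esym (Mkd_dim d)) j).
Proof. by rewrite /Mkd castmxE. Qed.

Lemma Mkd_tri (i j : 'I_(d ^ 2 - 1)) : (i < j)%N -> Mkd C d i j = 0.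
Proof.
rewrite Mkd_cast.
have vi : (cast_ord (esym (Mkd_dim d)) i : nat) = i by [].
have vj : (cast_ord (esym (Mkd_dim d)) j : nat) = j by [].
move: vi vj; set ci := cast_ord _ i; set cj := cast_ord _ j.
case: (split_ordP ci) => [a -> | p ->]; case: (split_ordP cj) => [b -> | q ->] /= <- <- h.
- by rewrite block_mxEul mxE /= ltnS h.
- by rewrite block_mxEur mxE.
- by move: h; rewrite ltnNge (leq_trans (ltnW (ltn_ord b)) (leq_addr _ _)).
- rewrite block_mxEdr mxE; rewrite ltn_add2l in h.
  by have/negbTE -> : p != q by rewrite -val_eqE /= neq_ltn h.
Qed.

Lemma Mkd_diag (i : 'I_(d ^ 2 - 1)) : Mkd C d i i != 0.
Proof.
rewrite Mkd_cast; set ci := cast_ord _ i.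
case: (split_ordP ci) => [a -> | p ->].
  rewrite block_mxEul mxE /= ltnn eqxx.
  by case: ifP => _; apply: mulf_neq0; rewrite ?invr_eq0 ?pnatr_eq0.
by rewrite block_mxEdr mxE eqxx oner_eq0.
Qed.


Lemma adj_delta m p (i : 'I_m) (j : 'I_p) :
  adj (delta_mx i j : 'M[C]_(m,p)) = delta_mx j i.
Proof. by apply/matrixP => a b; rewrite /adj !mxE rmorph_nat andbC. Qed.

Lemma povm_basis m : povm (fun l : 'I_m => (delta_mx l l : 'M[C]_m)).
Proof.
split; last by rewrite [RHS]mx1_sum_delta.
move=> l; split; first exact: adj_delta.
move=> x.
have -> : adj x *m delta_mx l l *m x =
    adj ((delta_mx 0 l : 'M[C]_(1, m)) *m x) *m ((delta_mx 0 l : 'M[C]_(1, m)) *m x).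
  by rewrite adj_mul adj_delta -(@mul_delta_mx _ _ 1 _ 0) !mulmxA.
exact: adjy_ge0.
Qed.

Lemma part1 (V : 'M[C]_(d * d, d ^ 2 - 1)) :
  is_isometry V -> adj (phiplus C d) *m V = 0 ->
  @Pmin C (d ^ 2 - 1) d d (d ^ 2 - 1) (d ^ 2 - 1) V (Mkd C d).
Proof.
move=> hV hpV.
have e : (d ^ 2 - 1 + 1 = d * d)%N by rewrite subnK ?expn_gt0 // mulnn.
have hVV := VVproj e hV hpV phi_norm.
pose cst := fun i : 'I_(d ^ 2 - 1) => cast_ord (esym (Mkd_dim d)) i.
exists (fun i => adj V *m (vec (fS (cst i)) *m adj (vec (fS (cst i)))) *m V), d, d,
  (fun l => delta_mx l l), (fun k => delta_mx k k),
  (fun l k j => (tgt l k == cst j)%:R).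
split; first by move=> i; exact: (state_ok hVV (psi_orth _) (psi_norm _)).1.
split; first exact: povm_basis.
split; first exact: povm_basis.
split; first by move=> *; rewrite ler0n.
split.
  move=> l k.
  have ck : cst (cast_ord (Mkd_dim d) (tgt l k)) = tgt l k by apply: val_inj.
  rewrite (bigD1 (cast_ord (Mkd_dim d) (tgt l k))) //= ck eqxx big1 ?addr0 // => j hj.
  have /negbTE -> // : tgt l k != cst j.
  apply: contra hj => /eqP ->; apply/eqP/val_inj; by [].
move=> i j.
rewrite (state_ok hVV (psi_orth _) (psi_norm _)).2 Mkd_cast -main_sum.
apply: eq_bigr => l _; apply: eq_bigr => k _.
by rewrite tr_E vecE.
Qed.

End Conc.

Unset Implicit Arguments.

Theorem theorem3 (C : numClosedFieldType) (d : nat) (hd : (3 <= d)%N)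
    (V : 'M[C]_(d * d, d ^ 2 - 1)) :
  is_isometry V ->
  adj (phiplus C d) *m V = 0 ->
  @Pmin C (d ^ 2 - 1) d d (d ^ 2 - 1) (d ^ 2 - 1) V (Mkd C d) /\
  forall dt : nat, (dt < d ^ 2 - 1)%N ->
    ~ (forall P : 'M[C]_(d ^ 2 - 1, d ^ 2 - 1),
         @Pmin C (d ^ 2 - 1) d d (d ^ 2 - 1) (d ^ 2 - 1) V P -> Pset dt P).
Proof.
case: d hd V => [|[|n]] // hd V hV hp.
have P1 := part1 hV hp.
split => // dt hdt H.
have := tri_dim (@Mkd_tri C n) (@Mkd_diag C n) (H _ P1).
by rewrite leqNgt hdt.
Qed.
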